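(* Let $q$ be a power of a prime $p$, let $n \geq 2$, let $\zeta$ be a primitive element of $\mathbb{F}_{q^n}$ and let $w \in \{0,1,\ldots,n\}$. If $q = 2$, further assume that $w \neq n$. Then $$\sigma_w(\zeta^k) = \mathcal{F}_\zeta[\delta_w](k) \quad \text{for all } k \in \mathbb{Z}_{q^n-1}.$$
   Context: For $0 \le w \le n$, $\sigma_w : \mathbb{F}_{q^n} \to \mathbb{F}_q$ is defined by $\sigma_0(\xi) = 1$ and, for $1 \le w \le n$, $\sigma_w(\xi) = \sum_{0 \le i_1 < \cdots < i_w \le n-1} \xi^{q^{i_1} + \cdots + q^{i_w}}$ (so that the characteristic polynomial of $\xi$ over $\mathbb{F}_q$ is $\prod_{k=0}^{n-1}(x - \xi^{q^k}) = \sum_{w=0}^n (-1)^w \sigma_w(\xi) x^{n-w}$). Define $\Omega(0) = \{0\} \subseteq \mathbb{Z}_{q^n-1}$ and, for $1 \le w \le n$, $\Omega(w)$ is the set of $k \in \mathbb{Z}_{q^n-1}$ whose canonical representative in $\{0,1,\ldots,q^n-2\}$ equals $q^{i_1} + \cdots + q^{i_w}$ for some integers $0 \le i_1 < \cdots < i_w \le n-1$. Then $\delta_w : \mathbb{Z}_{q^n-1} \to \{0,1\} \subseteq \mathbb{F}_p$ is the indicator function of $\Omega(w)$. For $N \mid q^n-1$, a primitive $N$-th root of unity $\zeta_N \in \mathbb{F}_{q^n}$, and $f : \mathbb{Z}_N \to \mathbb{F}_{q^n}$, the discrete Fourier transform is $\mathcal{F}_{\zeta_N}[f](i) = \sum_{j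 \in \mathbb{Z}_N} f(j)\zeta_N^{ij}$; here $N = q^n-1$ and $\zeta_N = \zeta$. *)

(* Defs.v *)
From HB Require Import structures.
From mathcomp Require Import all_boot all_order all_algebra all_field.
Unset Printing Implicit Defensive.
Import GRing.Theory.
Local Open Scope ring_scope.

Definition sigma (L : finFieldType) (q n w : nat) (xi : L) : L :=
  if w is 0 then 1
  else \sum_(S : {set 'I_n} | #|S| == w) xi ^+ (\sum_(i in S) q ^ i)%N.

Definition Omega (q n w : nat) (j : 'I_(q ^ n).-1) : bool :=
  if w is 0 then (val j == 0)%N
  else [exists S : {set 'I_n}, (#|S| == w) && (val j == \sum_(i in S) q ^ i)%N].

(* delta_w : Z_{q^n-1} -> {0,1} subset F_p, viewed inside L (F_p is the prime subfield). *)
Definition delta (L : finFieldType) (q n w : nat) (j : 'I_(q ^ n).-1) : L :=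
  (Omega q n w j)%:R.

Definition dft (L : finFieldType) (N : nat) (z : L) (f : 'I_N -> L) (i : 'I_N) : L :=
  \sum_(j < N) f j * z ^+ (i * j)%N.

(* Main.v *)
Require Import Defs.
From HB Require Import structures.
From mathcomp Require Import all_boot all_order all_algebra all_field.
From mathcomp Require Import zify.
Import GRing.Theory.

Lemma geo_eq (q m : nat) : 0 < q -> (\sum_(i < m) q ^ i) * q.-1 + 1 = q ^ m.
Proof.
move=> hq0.
elim: m => [|m IH]; first by rewrite big_ord0.
rewrite big_ord_recr /= mulnDl -addnAC IH expnS.
case: q hq0 {IH} => [|q] //= _.
set x := _ ^ m; nia.
Qed.

Lemma geo_lt (q m : nat) : 1 < q -> \sum_(i < m) q ^ i < q ^ m.
Proof.
move=> hq; have := @geo_eq q m (ltnW hq).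
have : 0 < q.-1 by lia.
nia.
Qed.

Lemma low_lt (q n : nat) (S : {set 'I_n}) (m : nat) : 1 < q -> m <= n ->
  \sum_(i in S | i < m) q ^ i < q ^ m.
Proof.
move=> hq hm; apply: leq_ltn_trans (@geo_lt q m hq).
rewrite (big_ord_widen n (fun i => q ^ i) hm).
rewrite [X in _ <= X]big_mkcond [X in X <= _]big_mkcond /=.
apply: leq_sum => i _. by case: (i \in S); case: (i < m).
Qed.

Lemma decomp (q n : nat) (S : {set 'I_n}) (m : 'I_n) :
  \sum_(i in S) q ^ i = \sum_(i in S | i < m) q ^ i +
     q ^ m * ((m \in S) + q * \sum_(i in S | m < i) q ^ (i - m.+1)).
Proof.
rewrite (bigID (fun i : 'I_n => i < m)) /=; congr (_ + _).
rewrite (bigID (fun i : 'I_n => i == m)) /= mulnDr; congr (_ + _).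
  case: (boolP (m \in S)) => hmS.
    rewrite (big_pred1 m) ?muln1 // => i /=; case: eqP => [->|]; rewrite ?hmS ?ltnn //.
    by rewrite andbF.
  rewrite big_pred0 ?muln0 // => i /=; case: eqP => [->|]; rewrite ?(negbTE hmS) ?andbF //.
rewrite mulnA -expnSr big_distrr /=; apply: eq_big => i.
  rewrite -andbA; congr (_ && _); rewrite -leqNgt [RHS]ltn_neqAle andbC; congr (_ && _).
  by rewrite eq_sym.
move/andP=> [/andP [_ h1] h2]; rewrite -expnD subnKC //.
have h3 : (val i != val m) by [].
move: h1 h3; rewrite -leqNgt => a b; by rewrite ltn_neqAle a andbT eq_sym.
Qed.

Lemma digit (q n : nat) (S : {set 'I_n}) (m : 'I_n) : 1 < q ->
  ((\sum_(i in S) q ^ i) %/ q ^ m) %% q = (m \in S).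
Proof.
move=> hq; rewrite (@decomp q n S m) addnC mulnC divnMDl ?expn_gt0 ?(ltnW hq) //.
rewrite divn_small ?addn0; last by apply: low_lt => //; exact: ltnW (ltn_ord m).
rewrite addnC [q * _]mulnC modnMDl modn_small //; case: (m \in S) => //; exact: ltnW.
Qed.

Lemma sum_inj (q n : nat) (S T : {set 'I_n}) : 1 < q ->
  \sum_(i in S) q ^ i = \sum_(i in T) q ^ i -> S = T.
Proof.
move=> hq h; apply/setP => m.
by have := @digit q n S m hq; rewrite h digit // => /eqP; case: (m \in S); case: (m \in T).
Qed.

Lemma sum_lt (q n : nat) (S : {set 'I_n}) : 1 < q -> 0 < n ->
  (q = 2 -> #|S| < n) -> \sum_(i in S) q ^ i < (q ^ n).-1.
Proof.
move=> hq hn h2.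
have hA := @geo_eq q n (ltnW hq).
have hSA : \sum_(i in S) q ^ i <= \sum_(i < n) q ^ i.
  rewrite [X in X <= _]big_mkcond /=; apply: leq_sum => i _; by case: (i \in S).
have hx : q ^ 0 < q ^ n by rewrite ltn_exp2l.
rewrite expn0 in hx.
case: (eqVneq q 2) => hq2.
  have : 0 < #|~: S|.
    have := cardsC S; rewrite card_ord; have := h2 hq2; lia.
  case/card_gt0P => i0; rewrite inE => hi0.
  have hB : \sum_(i in S) q ^ i + q ^ i0 <= \sum_(i < n) q ^ i.
    rewrite [X in _ <= X](bigID (fun i => i \in S)) /=; apply: leq_add => //.
    rewrite (bigD1 i0) //=; exact: leq_addr.
  have : 0 < q ^ i0 by rewrite expn_gt0 ltnW.
  move: hA hB hSA hx; clear h2 hq; subst q => /=.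
  set A := \sum_(i < n) _; set B := \sum_(i in S) _; set x := 2 ^ n; set y := 2 ^ i0.
  lia.
have hq3 : 2 <= q.-1 by move: hq hq2; clear; case: q => [|[|[|q]]].
move: hA hSA hx.
set A := \sum_(i < n) _; set B := \sum_(i in S) _; set x := q ^ n.
nia.
Qed.

Local Open Scope ring_scope.

Theorem lemma3p1 (p e q n : nat) (L : finFieldType)
  (hp : prime p) (he : (0 < e)%N) (hq : q = (p ^ e)%N) (hn : (2 <= n)%N)
  (hL : #|L| = (q ^ n)%N)
  (zeta : L) (hz : (q ^ n).-1.-primitive_root zeta)
  (w : nat) (hw : (w <= n)%N) (hq2 : q = 2%N -> w <> n) :
  forall k : 'I_(q ^ n).-1,
    sigma L q n w (zeta ^+ k) = dft L ((q ^ n).-1) zeta (delta L q n w) k.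
Proof.
move=> k.
have hq1 : (1 < q)%N.
  have := prime_gt1 hp; have := @expn_gt0 p e.+1; rewrite hq; move: he.
  case: e {hq} => // e _ _ h; rewrite expnS; have := @expn_gt0 p e; rewrite (ltnW h); nia.
have hx : (q ^ 1 < q ^ n)%N by rewrite ltn_exp2l //; apply: leq_trans hn.
rewrite expn1 in hx.
have hN : (0 < (q ^ n).-1)%N by lia.
case: w hw hq2 => [|w] hw hq2.
  rewrite /dft /delta /Omega /sigma (bigD1 (Ordinal hN)) //= muln0 expr0 mulr1.
  rewrite big1 ?addr0 // => j hj.
  have -> : (val j == 0%N) = false.
    by apply/negbTE; apply: contra hj => /eqP hj0; apply/eqP; apply: val_inj.
  by rewrite mul0r.
pose f (S : {set 'I_n}) := (\sum_(i in S) q ^ i)%N.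
pose h (S : {set 'I_n}) : 'I_(q ^ n).-1 := Ordinal (ltn_pmod (f S) hN).
pose A := [set S : {set 'I_n} | #|S| == w.+1].
have hfA : forall S, S \in A -> (f S < (q ^ n).-1)%N.
  move=> S; rewrite inE => /eqP hS; apply: sum_lt => //; first lia.
  move=> hq22; have := hq2 hq22; lia.
have hhA : forall S, S \in A -> nat_of_ord (h S) = f S.
  by move=> S hS /=; rewrite modn_small // hfA.
have hinj : {in A &, injective h}.
  move=> S T hS hT hST; apply: (@sum_inj q n S T hq1).
  by rewrite -/(f S) -/(f T) -hhA // -hhA // hST.
have hOm : forall j, Omega q n w.+1 j = (j \in h @: A).
  move=> j; rewrite /Omega; apply/existsP/imsetP.
    move=> [S /andP [hS /eqP hj]]; exists S; first by rewrite inE.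
    by apply: val_inj; rewrite hj; symmetry; apply: hhA; rewrite inE.
  move=> [S hS ->]; exists S; apply/andP; split; first by rewrite inE in hS.
  by apply/eqP; exact: hhA.
rewrite /dft /delta /sigma.
transitivity (\sum_(j in h @: A) zeta ^+ (k * j)%N).
  rewrite (big_imset _ hinj) /=; apply: eq_big => S; first by rewrite inE.
  by move=> hS; rewrite -exprM modn_small //; apply: hfA; rewrite inE.
rewrite big_mkcond; apply: eq_bigr => j _; have -> := hOm j.
by case: (j \in h @: A); rewrite ?mul1r ?mul0r.
Qed.
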